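(* Let $D$ be a regular $(v,k,\lambda,\mu)$-PDS in a finite group $G$ with $0<\mu<k$ and $\sqrt\Delta\in\mathbb{Z}$. If $\xi$ and $\chi$ are nonprincipal linear characters of $G$ whose orders are both coprime to $\sqrt\Delta$, then $\xi(D)=\chi(D)$.
   Context: A $(v,k,\lambda,\mu)$-PDS in a group $G$ of order $v$ is a $k$-subset $D$ such that every nonidentity element of $D$ is $xy^{-1}$ ($x,y\in D$) in exactly $\lambda$ ways and every nonidentity element of $G\setminus D$ in exactly $\mu$ ways; regular means $D=D^{(-1)}$ and $1\notin D$. $\Delta=(\lambda-\mu)^2+4(k-\mu)$; $\chi(D)=\sum_{d\in D}\chi(d)$. *)

(* Defs.v *)
From mathcomp Require Import all_boot all_order all_algebra all_fingroup all_solvable all_field all_character.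
Set Implicit Arguments. Unset Strict Implicit. Unset Printing Implicit Defensive.
Import GRing.Theory Num.Theory.

Local Open Scope group_scope.

Definition pds_count (gT : finGroupType) (D : {set gT}) (g : gT) : nat :=
  #|[set p : gT * gT | (p.1 \in D) && (p.2 \in D) && (p.1 * p.2^-1 == g)]|.

Definition is_PDS (gT : finGroupType) (G : {group gT}) (D : {set gT})
  (v k lam mu : nat) : Prop :=
  [/\ D \subset G, #|G| = v, #|D| = k,
      (forall g, g \in D -> g != 1 -> pds_count D g = lam) &
      (forall g, g \in G :\: D -> g != 1 -> pds_count D g = mu)].

Definition is_regular_PDS (gT : finGroupType) (G : {group gT}) (D : {set gT})
  (v k lam mu : nat) : Prop :=
  [/\ is_PDS G D v k lam mu, D^-1 = D & 1 \notin D].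

Definition pds_Delta (k lam mu : nat) : int :=
  ((lam%:Z - mu%:Z) ^+ 2 + 4 * (k%:Z - mu%:Z))%R.

Definition char_sum (gT : finGroupType) (G : {group gT}) (chi : 'CF(G))
  (D : {set gT}) : algC := (\sum_(d in D) chi d)%R.

(* Main.v *)
Require Import Defs.
From mathcomp Require Import all_boot all_order all_algebra all_fingroup all_solvable all_field all_character.
From mathcomp Require Import ring lra zify.
Import Order.TTheory GRing.Theory Num.Theory.
Local Open Scope ring_scope.
Lemma lin_dot (gT : finGroupType) (G : {group gT}) (phi psi : 'CF(G)) :
  phi \is a linear_char -> psi \is a linear_char -> '[phi, psi] = (phi == psi)%:R.
Proof.
move=> /lin_char_irr/irrP[i ->] /lin_char_irr/irrP[j ->].
by rewrite cfdot_irr (inj_eq irr_inj).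
Qed.

Lemma lin_sum_prod (gT : finGroupType) (G : {group gT}) (phi psi : 'CF(G)) :
  phi \is a linear_char -> psi \is a linear_char ->
  \sum_(x in G) phi x * (psi x)^* = #|G|%:R * (phi == psi)%:R.
Proof.
move=> Hp Hq; rewrite -(@lin_dot _ _ _ _ Hp Hq) cfdotE mulrA divff ?mul1r //.
by rewrite pnatr_eq0 -lt0n cardG_gt0.
Qed.

Lemma lin_sum0 (gT : finGroupType) (G : {group gT}) (psi : 'CF(G)) :
  psi \is a linear_char -> psi != 1 -> \sum_(x in G) psi x = 0.
Proof.
move=> Hp Hn; have := @lin_sum_prod _ _ _ _ Hp (rpred1 _).
rewrite (negPf Hn) mulr0 => H; rewrite -[RHS]H; apply: eq_bigr => x xG.
by rewrite cfun1E xG conjC1 mulr1.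
Qed.

Lemma cfunX_eval (gT : finGroupType) (G : {group gT}) (phi : 'CF(G)) n x :
  (phi ^+ n) x = phi x ^+ n * (1 : 'CF(G)) x.
Proof.
elim: n => [|n IH]; first by rewrite !expr0 mul1r.
by rewrite exprS cfunE IH exprS mulrA.
Qed.
Lemma split3 (gT : finGroupType) (G : {group gT}) (D : {set gT}) (F : gT -> algC) :
  D \subset G -> (1%g \notin D) ->
  \sum_(g in G) F g = F 1%g + \sum_(g in D) F g
     + \sum_(g in G | (g != 1%g) && (g \notin D)) F g.
Proof.
move=> sDG nD1.
rewrite (bigD1 1%g) ?group1 //= -addrA; congr (_ + _).
rewrite (bigID (mem D)) /=; congr (_ + _).
  apply: eq_bigl => g; rewrite andbC; case gD: (g \in D) => //=.
  by rewrite (subsetP sDG) //=; apply/eqP => g1; rewrite -g1 gD in nD1.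
by apply: eq_bigl => g; rewrite andbA.
Qed.

Lemma pds_quad (gT : finGroupType) (G : {group gT}) (D : {set gT})
  (v k lam mu : nat) (psi : 'CF(G)) :
  is_regular_PDS G D v k lam mu -> psi \is a linear_char -> psi != 1 ->
  char_sum psi D ^+ 2 = (lam%:R - mu%:R) * char_sum psi D + (k%:R - mu%:R).
Proof.
move=> [[sDG _ cardD Hlam Hmu] DV nD1] Hl Hn.
have inG x : x \in D -> x \in G by move=> /(subsetP sDG).
have A : char_sum psi D ^+ 2 =
   \sum_(p | (p.1 \in D) && (p.2 \in D)) psi (p.1 * p.2^-1)%g.
  rewrite expr2 /char_sum {2}(reindex_inj invg_inj) /=.
  rewrite [X in _ * X](eq_bigl (fun y => y \in D)); last first.
    by move=> y /=; rewrite -{2}DV mem_invg.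
  rewrite big_distrlr pair_big_dep /=; apply: eq_bigr => -[x y] /andP[xD yD] /=.
  by rewrite (lin_charM Hl) ?groupV ?inG.
have B : \sum_(p | (p.1 \in D) && (p.2 \in D)) psi (p.1 * p.2^-1)%g =
   \sum_(g in G) (pds_count D g)%:R * psi g.
  rewrite (partition_big (fun p => p.1 * p.2^-1)%g (mem G)) /=; last first.
    by move=> -[x y] /andP[xD yD] /=; rewrite groupM ?groupV ?inG.
  apply: eq_bigr => g gG.
  rewrite (eq_bigr (fun _ => psi g)); last by move=> p /andP[_ /eqP ->].
  by rewrite -big_set sumr_const /pds_count mulr_natl.
have C1 : pds_count D 1%g = k.
  rewrite /pds_count -cardD -(card_imset D (fun x y (e : (x, x) = (y, y)) => congr1 fst e)).
  apply: eq_card => -[x y]; rewrite inE /=; apply/idP/imsetP.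
    by move=> /andP[/andP[xD yD]]; rewrite -eq_mulgV1 => /eqP <-; exists x.
  by move=> [z zD [-> ->]]; rewrite zD mulgV eqxx.
have Z := @lin_sum0 _ _ _ Hl Hn.
rewrite (@split3 _ _ _ _ sDG nD1) (lin_char1 Hl) in Z.
rewrite A B (@split3 _ _ _ _ sDG nD1) C1 (lin_char1 Hl) mulr1.
rewrite (eq_bigr (fun g => lam%:R * psi g)); last first.
  by move=> g gD; rewrite Hlam //; apply/eqP => g1; rewrite -g1 gD in nD1.
rewrite [\sum_(g in G | _) _](eq_bigr (fun g => mu%:R * psi g)); last first.
  move=> g /andP[gG] /andP[g1 gD]; by rewrite Hmu // inE gD gG.
rewrite -!mulr_sumr.
have -> : \sum_(g in G | (g != 1%g) && (g \notin D)) psi g = - 1 - char_sum psi D.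
  by rewrite /char_sum; apply: (addrI (1 + \sum_(g in D) psi g)); rewrite Z; ring.
rewrite /char_sum; ring.
Qed.
Lemma count_dot (gT : finGroupType) (G : {group gT}) (I : finType)
  (psi : I -> 'CF(G)) (phi : 'CF(G)) :
  (forall i, psi i \is a linear_char) -> phi \is a linear_char ->
  (#|[pred j | psi j == phi]|)%:R =
    #|G|%:R^-1 * \sum_(y in G) (\sum_j psi j y) * (phi y)^*.
Proof.
move=> Hl Hp.
have -> : #|[pred j | psi j == phi]| = (\sum_(j in [pred j | psi j == phi]) 1)%N by rewrite sum1_card.
rewrite natr_sum big_mkcond /=.
rewrite (eq_bigr (fun j => '[psi j, phi])); last first.
  by move=> j _; rewrite (@lin_dot _ _ _ _ (Hl j) Hp) inE; case: (psi j == phi).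
under eq_bigr do rewrite cfdotE.
rewrite -mulr_sumr; congr (_ * _); rewrite exchange_big /=.
by apply: eq_bigr => y _; rewrite mulr_suml.
Qed.

Lemma count_bound (gT : finGroupType) (G : {group gT}) (I : finType)
  (psi : I -> 'CF(G)) (i0 : I) :
  (forall i, psi i \is a linear_char) ->
  (forall y, y \in G -> exists c : nat, \sum_i psi i y = c%:R) ->
  (#|[pred j | psi j == psi i0]| <= #|[pred j | psi j == (1%R : 'CF(G))]|)%N.
Proof.
move=> Hl HT.
rewrite -(ler_nat algC) -[X in X <= _]normr_nat (@count_dot _ _ _ _ _ Hl (Hl i0)) (@count_dot _ _ _ _ _ Hl (rpred1 _)).
rewrite normrM ger0_norm ?invr_ge0 ?ler0n //.
apply: ler_wpM2l; first by rewrite invr_ge0 ler0n.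
apply: le_trans (ler_norm_sum _ _ _) _; apply: ler_sum => y yG.
have [c ->] := HT y yG.
by rewrite cfun1E yG conjC1 mulr1 normrM normr_nat norm_conjC (normC_lin_char (Hl i0) yG) mulr1.
Qed.
Lemma arith (g x p N M : int) (W Q : int) :
  0 < g -> 0 < N -> 0 <= x -> 0 <= p ->
  g * x + N * W = 0 ->
  g * x * x + 2 * x * N * W + N * N * Q = g * M ->
  0 <= Q + W -> M <= x * p -> x + p <= N -> x = 0 \/ x + p = N.
Proof.
move=> g0 N0 x0 p0 h1 h2 h3 h4 h5.
have e1 : N * N * Q = g * (M + x * x) by nia.
have e2 : N * g * x <= N * N * Q by nia.
have e3 : x * N <= M + x * x by nia.
have e4 : x * (N - x - p) <= 0 by nia.
nia.
Qed.
Lemma sq (w : int) : 0 <= w * w + w.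
Proof. nia. Qed.

Lemma key (gT : finGroupType) (G : {group gT}) (D : {set gT}) (I : finType)
  (psi : I -> 'CF(G)) (r : int) (s : nat) :
  D \subset G ->
  (forall i, psi i \is a linear_char) ->
  coprime #|I| s ->
  (forall y, y \in G -> exists c : nat, \sum_i psi i y = (#|I| * c)%:R) ->
  (forall i, psi i != 1 -> char_sum (psi i) D = r%:~R \/
                            char_sum (psi i) D = r%:~R + s%:R) ->
  forall i j, psi i != 1 -> psi j != 1 -> char_sum (psi i) D = char_sum (psi j) D.
Proof.
move=> sDG Hl cop HT Hv i0 j0 ni0 nj0.
have [s0 | s_gt0] := posnP s.
  have := Hv i0 ni0; have := Hv j0 nj0.
  by rewrite s0 addr0 => -[]-> []->.
set N := #|I|.
pose P := [set i | psi i == 1].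
pose S := [set i | (psi i != 1) && (char_sum (psi i) D == r%:~R + s%:R)].
pose f y := \sum_(i in S) psi i y.
have /fin_all_exists [c Hc] : forall y : gT, exists c : nat, y \in G -> \sum_i psi i y = (N * c)%:R.
  move=> y; case: (boolP (y \in G)) => yG.
    by have [c ->] := HT y yG; exists c.
  by exists 0%N.
pose E y : int := (\sum_(d in D) c (d * y)%g)%:Z - r * (c y)%:Z.
have sf y : y \in G -> s%:R * f y = N%:R * (E y)%:~R - #|P|%:R * (#|D|%:R - r%:~R).
  move=> yG.
  have Xa : \sum_i (char_sum (psi i) D - r%:~R) * psi i y = N%:R * (E y)%:~R.
    under eq_bigr do rewrite mulrBl.
    rewrite sumrB -mulr_sumr Hc // /char_sum.
    under eq_bigr do rewrite mulr_suml.
    rewrite exchange_big /=.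
    rewrite (eq_bigr (fun d => (N * c (d * y)%g)%:R)); last first.
      move=> d dD; have dG : d \in G by apply: (subsetP sDG).
      rewrite -Hc ?groupM //; apply: eq_bigr => i _.
      by rewrite (lin_charM (Hl i) dG yG).
    have castn (n : nat) : (n%:Z)%:~R = n%:R :> algC by [].
    rewrite /E rmorphB /= intrM !castn natr_sum.
    under eq_bigr do rewrite natrM.
    by rewrite -mulr_sumr natrM; ring.
  have Xb : \sum_i (char_sum (psi i) D - r%:~R) * psi i y =
            #|P|%:R * (#|D|%:R - r%:~R) + s%:R * f y.
    rewrite (bigID (mem P)) /=; congr (_ + _).
      rewrite (eq_bigr (fun _ => #|D|%:R - r%:~R)); last first.
        move=> i; rewrite inE => /eqP ->; rewrite cfun1E yG mulr1 /char_sum.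
        rewrite (eq_bigr (fun _ => 1)); first by rewrite sumr_const.
        by move=> d dD; rewrite cfun1E (subsetP sDG).
      by rewrite sumr_const mulr_natl.
    rewrite (bigID (mem S)) /= [X in _ + X]big1 ?addr0; last first.
      move=> i /andP[]; rewrite !inE => ni nS.
      have [->|] := Hv i ni; first by rewrite subrr mul0r.
      by move=> h; rewrite h eqxx ni in nS.
    rewrite /f mulr_sumr; apply: eq_big => i.
      by rewrite !inE; case: (psi i == 1).
    rewrite !inE => /andP[_ /andP[_ /eqP ->]].
    by rewrite addrC addKr.
  by rewrite -Xa Xb; ring.
have f1 : f 1%g = #|S|%:R.
  rewrite /f (eq_bigr (fun _ => 1)) ?sumr_const // => i _; exact: lin_char1 (Hl i).
have Aintf y : f y \in Aint.
  by apply: rpred_sum => i _; apply: Aint_char; apply: lin_charW.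
have castn (n : nat) : (n%:Z)%:~R = n%:R :> algC by [].
have /fin_all_exists [w Hw] : forall y, exists w : int,
    y \in G -> f y = (#|S|%:Z + N%:Z * w)%:~R.
  move=> y; case: (boolP (y \in G)) => yG; last by exists 0.
  have H1 := sf y yG; have H2 := sf 1%g (group1 G).
  have ds : s%:R * (f y - f 1%g) = N%:R * (E y - E 1%g)%:~R.
    by rewrite mulrBr H1 H2 rmorphB /= /E; ring.
  have sn0 : s%:R != 0 :> algC by rewrite pnatr_eq0 -lt0n.
  have zi : f y - f 1%g \is a Num.int.
    apply: Cint_rat_Aint; last by rewrite rpredB.
    have -> : f y - f 1%g = s%:R^-1 * (N%:R * (E y - E 1%g)%:~R).
      by rewrite -ds mulKf.
    apply/CratP; exists (s%:R^-1 * (N%:R * (E y - E 1%g)%:~R)).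
    by rewrite rmorphM fmorphV rmorphM /= !rmorph_nat rmorph_int.
  have [m hm] := intrP zi.
  have hm2 : (m * s%:Z = (E y - E 1%g) * N%:Z)%R.
    by apply: (@intr_inj algC); rewrite !intrM !castn -hm mulrC ds mulrC.
  have dv : (N%:Z %| m)%Z.
    rewrite -(@Gauss_dvdzl N%:Z m s%:Z) ?coprimezE //.
    by apply/dvdzP; exists (E y - E 1%g).
  exists (m %/ N%:Z)%Z => _.
  rewrite rmorphD /= castn mulrC divzK // -hm -f1; ring.
have F1 : \sum_(y in G) f y = 0.
  rewrite /f exchange_big /= big1 // => i; rewrite inE => /andP[ni _].
  exact: lin_sum0 (Hl i) ni.
pose M := (\sum_(i in S) \sum_(j in S) (psi i == psi j : nat))%N.
have F2 : \sum_(y in G) f y * (f y)^* = #|G|%:R * M%:R.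
  rewrite /f; under eq_bigr do rewrite rmorph_sum big_distrlr /=.
  rewrite exchange_big /=; under eq_bigr do rewrite exchange_big /=.
  rewrite /M natr_sum mulr_sumr; apply: eq_bigr => i _.
  rewrite natr_sum mulr_sumr; apply: eq_bigr => j _.
  by rewrite lin_sum_prod.
set x := #|S|; set p := #|P|.
have HM : (M <= x * p)%N.
  rewrite /M -sum_nat_const; apply: leq_sum => i _.
  have HT' y : y \in G -> exists c : nat, \sum_i psi i y = c%:R.
    by move=> yG; have [c' ->] := HT y yG; exists (N * c')%N.
  have ep : p = #|[pred j | psi j == 1]| by apply: eq_card => j; rewrite !inE.
  rewrite ep; apply: leq_trans (@count_bound _ _ _ _ i Hl HT').
  have -> : #|[pred j | psi j == psi i]| =
            (\sum_(j in [pred j | psi j == psi i]) 1)%N by rewrite sum1_card.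
  rewrite [X in (_ <= X)%N]big_mkcond [X in (X <= _)%N]big_mkcond /=; apply: leq_sum => j _.
  by case: (j \in S); rewrite inE /= eq_sym; case: (psi i == psi j).
have cU : #|S :|: P| = (x + p)%N.
  rewrite -cardsUI.
  have -> : S :&: P = set0.
    by apply/setP => i; rewrite !inE; case: (psi i == 1); rewrite ?andbF.
  by rewrite cards0 addn0.
have Hxp : (x + p <= N)%N.
  rewrite -cardsUI.
  have -> : S :&: P = set0.
    by apply/setP => i; rewrite !inE; case: (psi i == 1); rewrite ?andbF.
  by rewrite cards0 addn0 max_card.
pose u y : int := (x%:Z + N%:Z * w y)%R.
have F1' : (\sum_(y in G) u y = 0)%R.
  apply/eqP; rewrite -(intr_eq0 algC) rmorph_sum /=; apply/eqP; rewrite -[RHS]F1.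
  by apply: eq_bigr => y yG; rewrite Hw.
have F2' : (\sum_(y in G) u y * u y = (#|G| * M)%N%:Z)%R.
  apply: (@intr_inj algC); rewrite rmorph_sum /= castn natrM -F2.
  by apply: eq_bigr => y yG; rewrite Hw // rmorph_int intrM.
pose W := (\sum_(y in G) w y)%R.
pose Q := (\sum_(y in G) w y * w y)%R.
have S1 : (\sum_(y in G) u y = #|G|%:Z * x%:Z + N%:Z * W)%R.
  rewrite /u big_split /= sumr_const -mulr_sumr; congr (_ + _).
  by rewrite -mulr_natl ?natz.
have S2 : (\sum_(y in G) u y * u y =
   #|G|%:Z * x%:Z * x%:Z + 2 * x%:Z * N%:Z * W + N%:Z * N%:Z * Q)%R.
  rewrite /u (eq_bigr (fun y => x%:Z * x%:Z + (2 * x%:Z * N%:Z) * w y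
      + (N%:Z * N%:Z) * (w y * w y))%R); last by move=> y _; ring.
  rewrite big_split big_split /= sumr_const -!mulr_sumr; congr (_ + _ + _).
  by rewrite -mulr_natl ?natz mulrA.
have S3 : (0 <= Q + W)%R.
  rewrite /Q /W -big_split /=; apply: sumr_ge0 => y _; exact: sq.
have gpos : (0 < #|G|)%N := cardG_gt0 G.
have Npos : (0 < N)%N by apply/card_gt0P; exists i0.
have := @arith #|G|%:Z x%:Z p%:Z N%:Z M%:Z W Q.
have h4 : (M%:Z <= x%:Z * p%:Z)%R by rewrite -PoszM lez_nat.
have h5 : (x%:Z + p%:Z <= N%:Z)%R by rewrite -PoszD lez_nat.
rewrite -S1 F1' -S2 F2' PoszM => /(_ _ _ _ _ erefl erefl S3 h4 h5).
move=> H; have [hx|hxp] : (x%:Z = 0 \/ x%:Z + p%:Z = N%:Z)%R by apply: H; rewrite ?ltz_nat ?lez_nat.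
  have S0 : forall k, k \notin S.
    move=> k; apply/negP => kS.
    have : (0 < x)%N by apply/card_gt0P; exists k.
    by case: hx => ->.
  have val k : psi k != 1 -> char_sum (psi k) D = r%:~R.
    move=> nk; have := S0 k; rewrite inE nk /=.
    by case: (Hv k nk) => // -> ; rewrite eqxx.
  by rewrite !val.
have hxp' : (x + p)%N = N by case: hxp.
have SP : S :|: P = setT.
  by apply/eqP; rewrite eqEcard subsetT cardsT cU hxp' /N leqnn.
have val k : psi k != 1 -> char_sum (psi k) D = r%:~R + s%:R.
  move=> nk; have : k \in S :|: P by rewrite SP inE.
  by rewrite !inE (negPf nk) orbF /= => /eqP.
by rewrite !val.
Qed.
Lemma geo (z : algC) (n : nat) : z ^+ n = 1 ->
  exists c : nat, \sum_(i < n) z ^+ i = (n * c)%:R.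
Proof.
move=> h; have [->|nz] := eqVneq z 1.
  exists 1%N; rewrite muln1 (eq_bigr (fun _ => 1)) ?sumr_const ?card_ord //.
  by move=> i _; rewrite expr1n.
exists 0%N; rewrite muln0.
have := subrX1 z n; rewrite h subrr => /esym/eqP; rewrite mulf_eq0 subr_eq0 (negPf nz) /=.
by move/eqP.
Qed.

Lemma lin_pow_one (gT : finGroupType) (G : {group gT}) (xi : 'CF(G)) y :
  y \in G -> xi y ^+ #[xi]%CF = 1.
Proof.
move=> yG; have := congr1 (fun phi : 'CF(G) => phi y) (exp_cforder xi).
by rewrite /= cfunX_eval cfun1E yG mulr1.
Qed.

Lemma parity (t s K : int) : s ^+ 2 = t ^+ 2 + 4 * K -> exists r : int, t - s = 2 * r.
Proof.
move=> h.
exists ((t - s) %/ 2)%Z.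
have e := divz_eq (t - s) 2.
have m0 : 0 <= ((t - s) %% 2)%Z by apply: modz_ge0.
have m1 : ((t - s) %% 2 < 2)%Z by apply: ltz_pmod.
set q := ((t - s) %/ 2)%Z in e *; set rr := ((t - s) %% 2)%Z in e m0 m1 *.
have : rr = 0 \/ rr = 1 by lia.
case=> hr; first by rewrite hr addr0 mulrC in e; exact: e.
exfalso.
have ht : t = s + q * 2 + 1 by rewrite hr in e; lia.
rewrite ht in h.
have : 1 = 2 * (- 2 * K - 2 * q * q - 2 * q * s - 2 * q - s) by move: h; rewrite !expr2; nia.
lia.
Qed.

Lemma ord_gt1 (gT : finGroupType) (G : {group gT}) (xi : 'CF(G)) :
  xi \is a linear_char -> xi != 1 -> (1 < #[xi]%CF)%N.
Proof.
move=> Hl n1; have := cforder_lin_char_gt0 Hl.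
case e: #[xi]%CF => [|[|m]] // _.
by have := exp_cforder xi; rewrite e expr1 => h; rewrite h eqxx in n1.
Qed.

Theorem mainTheorem7 (gT : finGroupType) (G : {group gT}) (D : {set gT})
  (v k lam mu : nat) (s : nat) (xi chi : 'CF(G)) :
  is_regular_PDS G D v k lam mu ->
  (0 < mu)%N -> (mu < k)%N ->
  (s%:Z ^+ 2)%R = pds_Delta k lam mu ->
  xi \is a linear_char -> xi != 1%R ->
  chi \is a linear_char -> chi != 1%R ->
  coprime #[xi]%CF s -> coprime #[chi]%CF s ->
  char_sum xi D = char_sum chi D.
Proof.
move=> Hreg mu0 muk hs Hxi nxi Hchi nchi cxi cchi.
have [[sDG _ cardD _ _] _ _] := Hreg.
pose psi (p : 'I_#[xi]%CF * 'I_#[chi]%CF) : 'CF(G) := xi ^+ p.1 * chi ^+ p.2.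
have Hl p : psi p \is a linear_char by rewrite rpredM ?rpredX.
have [r hr] := @parity (lam%:Z - mu%:Z) s%:Z (k%:Z - mu%:Z) hs.
have e2 : (r * (r + s%:Z) = - (k%:Z - mu%:Z))%R.
  move: hs; rewrite /pds_Delta !expr2; nia.
have Hv p : psi p != 1 -> char_sum (psi p) D = r%:~R \/
                          char_sum (psi p) D = r%:~R + s%:R.
  move=> np; have q := @pds_quad _ _ _ _ _ _ _ _ Hreg (Hl p) np.
  set c := char_sum (psi p) D in q *.
  have E1 : ((lam%:Z - mu%:Z - (2 * r + s%:Z))%:~R : algC) = 0.
    by rewrite (_ : lam%:Z - mu%:Z - (2 * r + s%:Z) = 0)%R //; lia.
  have E2 : ((r * (r + s%:Z) + (k%:Z - mu%:Z))%:~R : algC) = 0.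
    by rewrite (_ : r * (r + s%:Z) + (k%:Z - mu%:Z) = 0)%R //; lia.
  have : (c - r%:~R) * (c - (r%:~R + s%:R)) = 0.
    have -> : (c - r%:~R) * (c - (r%:~R + s%:R)) =
      (c ^+ 2 - ((lam%:R - mu%:R) * c + (k%:R - mu%:R)))
      + ((lam%:Z - mu%:Z - (2 * r + s%:Z))%:~R * c)
      + (r * (r + s%:Z) + (k%:Z - mu%:Z))%:~R.
      rewrite ?rmorphD ?rmorphN ?rmorphB ?rmorphM /=; ring.
    by rewrite E1 E2 q subrr mul0r !addr0.
  move/eqP; rewrite mulf_eq0 !subr_eq0 => /orP[] /eqP h; [left | right] => //.
have HT y : y \in G -> exists c : nat,
    \sum_p psi p y = (#|{: 'I_#[xi]%CF * 'I_#[chi]%CF}| * c)%:R.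
  move=> yG; have [c1 h1] := @geo _ _ (@lin_pow_one _ _ xi _ yG).
  have [c2 h2] := @geo _ _ (@lin_pow_one _ _ chi _ yG).
  exists (c1 * c2)%N; rewrite card_prod !card_ord.
  rewrite (eq_bigr (fun p : 'I_#[xi]%CF * 'I_#[chi]%CF => xi y ^+ p.1 * chi y ^+ p.2)); last first.
    by move=> p _; rewrite cfunE !cfunX_eval cfun1E yG !mulr1.
  rewrite -(pair_bigA _ (fun (i : 'I_#[xi]%CF) (j : 'I_#[chi]%CF) => xi y ^+ i * chi y ^+ j)) /= -big_distrlr /=.
  by rewrite h1 h2 -natrM mulnACA.
have cop : coprime #|{: 'I_#[xi]%CF * 'I_#[chi]%CF}| s.
  by rewrite card_prod !card_ord coprimeMl cxi cchi.
pose i0 : 'I_#[xi]%CF * 'I_#[chi]%CF :=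
  (Ordinal (@ord_gt1 _ _ _ Hxi nxi), Ordinal (cforder_lin_char_gt0 Hchi)).
pose j0 : 'I_#[xi]%CF * 'I_#[chi]%CF :=
  (Ordinal (cforder_lin_char_gt0 Hxi), Ordinal (@ord_gt1 _ _ _ Hchi nchi)).
have pi0 : psi i0 = xi by rewrite /psi /= expr1 expr0 mulr1.
have pj0 : psi j0 = chi by rewrite /psi /= expr1 expr0 mul1r.
have := @key _ _ _ _ psi r s sDG Hl cop HT Hv i0 j0.
by rewrite pi0 pj0 => ->.
Qed.
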